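(* Assume the setting below and sharp missingness: $M_i(1)=M_i(0)$ for all $1\le i\le n$. Fix $\boldsymbol\delta\in\mathbb R^n$ and $b\in\mathbb R$, and let $\boldsymbol w\in\mathbb R^n$ have coordinates $w_i=Y_i-\delta_iZ_i$ if $M_i=1$ and $w_i=b$ if $M_i=0$. Then $\tilde p^{\texttt c}_{\boldsymbol Z,\boldsymbol\delta,b}:=G_{\mathrm R,\phi}(t_{\mathrm R,\phi}(\boldsymbol Z,\boldsymbol w))$ is a valid p-value for $H_{\boldsymbol\delta}:\boldsymbol\tau=\boldsymbol\delta$: if $H_{\boldsymbol\delta}$ holds, $\mathbb P(\tilde p^{\texttt c}_{\boldsymbol Z,\boldsymbol\delta,b}\le\alpha)\le\alpha$ for all $\alpha\in(0,1)$.
   Context: There are $n$ units with fixed potential outcomes $Y_i^\star(0),Y_i^\star(1)\in\mathbb R$ and fixed potential missingness indicators $M_i(0),M_i(1)\in\{0,1\}$; $\tau_i=Y_i^\star(1)-Y_i^\star(0)$, $\boldsymbol\tau=(\tau_1,\dots,\tau_n)^\intercal$. $\boldsymbol Z\in\{0,1\}^n$ is from a completely randomized experiment (CRE): uniform over vectors with exactly $n_1$ ones ($n_1,n_0\ge1$ fixed, $n_1+n_0=n$), independent of all potential quantities; probabilities are over $\boldsymbol Z$. $M_i=Z_iM_i(1)+(1-Z_i)M_i(0)$; the realized outcome $Z_iY_i^\star(1)+(1-Z_i)Y_i^\star(0)$ is observed, denoted $Y_i$, iff $M_i=1$. $\psi_{i,j}(y,y')=\mathbf 1\{y>y'\}+\mathbf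 1\{y=y'\}\mathbf 1\{i\ge j\}$; $\mathrm{rank}_i(\boldsymbol y)=\sum_j\psi_{i,j}(y_i,y_j)$; $\phi$ nondecreasing real function on the nonnegative integers; $t_{\mathrm R,\phi}(\boldsymbol z,\boldsymbol y)$ is either $\sum_i z_i\phi(\mathrm{rank}_i(\boldsymbol y))$ or $\sum_i z_i\phi(\sum_j(1-z_j)\psi_{i,j}(y_i,y_j))$ (result holds for either); $G_{\mathrm R,\phi}(c)=\mathbb P(t_{\mathrm R,\phi}(\boldsymbol A,\boldsymbol y_0)\ge c)$ with $\boldsymbol A$ from the CRE and $\boldsymbol y_0\in\mathbb R^n$ any fixed vector (independent of $\boldsymbol y_0$). *)

(* Defs.v *)
From mathcomp Require Import all_boot all_order all_algebra.
Set Implicit Arguments. Unset Strict Implicit. Unset Printing Implicit Defensive.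
Import Order.TTheory GRing.Theory Num.Theory.
Local Open Scope ring_scope.

Notation assign n := {ffun 'I_n -> bool}.

Definition cre (n n1 : nat) : {set assign n} :=
  [set z : assign n | #|[set i | z i]| == n1].

Definition cre_prob (R : realFieldType) (n n1 : nat) (E : pred (assign n)) : R :=
  #|[set z in cre n n1 | E z]|%:R / #|cre n n1|%:R.

Definition psi (R : realFieldType) (n : nat) (i j : 'I_n) (y y' : R) : nat :=
  ((y' < y) || ((y == y') && (j <= i)%N) : bool).

Definition rank (R : realFieldType) (n : nat) (y : 'I_n -> R) (i : 'I_n) : nat :=
  (\sum_(j < n) psi i j (y i) (y j))%N.

Definition t_stat (R : realFieldType) (n : nat) (variant : bool) (phi : nat -> R)
    (z : assign n) (y : 'I_n -> R) : R :=
  if variant then \sum_(i < n) (z i)%:R * phi (rank y i)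
  else \sum_(i < n) (z i)%:R *
         phi (\sum_(j < n) (1 - z j) * psi i j (y i) (y j))%N.

Definition G_stat (R : realFieldType) (n n1 : nat) (variant : bool) (phi : nat -> R)
    (y0 : 'I_n -> R) (c : R) : R :=
  cre_prob R n1 (fun A => c <= t_stat variant phi A y0).

Definition obsM (n : nat) (M1 M0 : 'I_n -> bool) (z : assign n) (i : 'I_n) : bool :=
  if z i then M1 i else M0 i.

Definition realY (R : realFieldType) (n : nat) (Y1 Y0 : 'I_n -> R) (z : assign n)
    (i : 'I_n) : R :=
  if z i then Y1 i else Y0 i.

Definition wvec (R : realFieldType) (n : nat) (Y1 Y0 : 'I_n -> R) (M1 M0 : 'I_n -> bool)
    (delta : 'I_n -> R) (b : R) (z : assign n) (i : 'I_n) : R :=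
  if obsM M1 M0 z i then realY Y1 Y0 z i - delta i * (z i)%:R else b.

Definition pval (R : realFieldType) (n n1 : nat) (variant : bool) (phi : nat -> R)
    (y0 : 'I_n -> R) (Y1 Y0 : 'I_n -> R) (M1 M0 : 'I_n -> bool)
    (delta : 'I_n -> R) (b : R) (z : assign n) : R :=
  G_stat n1 variant phi y0 (t_stat variant phi z (wvec Y1 Y0 M1 M0 delta b z)).

(* Main.v *)
Require Import Defs.
From mathcomp Require Import all_boot all_order all_algebra.
From mathcomp Require Import all_fingroup zify.
Require Import Defs.
Import Order.TTheory GRing.Theory Num.Theory.
Local Open Scope ring_scope.
Set Implicit Arguments. Unset Strict Implicit.

Section Rk.
Variables (R : realFieldType) (n : nat) (y : 'I_n -> R).

Definition lexle (j i : 'I_n) : bool := (y j < y i) || ((y i == y j) && (j <= i)%N).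

Lemma lexle_refl i : lexle i i.
Proof. by rewrite /lexle eqxx leqnn orbT. Qed.

Lemma lexle_trans k j i : lexle k j -> lexle j i -> lexle k i.
Proof.
rewrite /lexle => /orP[h1|/andP[/eqP e1 h1]] /orP[h2|/andP[/eqP e2 h2]].
- by rewrite (lt_trans h1 h2).
- by rewrite e2 h1.
- by rewrite e1 in h2; rewrite h2.
- by rewrite e2 e1 eqxx (leq_trans h1 h2) orbT.
Qed.

Lemma lexle_total j i : lexle j i || lexle i j.
Proof.
rewrite /lexle; case: (ltgtP (y j) (y i)) => //= e.
by rewrite leq_total.
Qed.

Lemma lexle_anti j i : lexle j i -> lexle i j -> j = i.
Proof.
rewrite /lexle => /orP[h1|/andP[/eqP e1 h1]] /orP[h2|/andP[/eqP e2 h2]].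
- by have := lt_trans h1 h2; rewrite ltxx.
- by move: h1; rewrite e2 ltxx.
- by move: h2; rewrite e1 ltxx.
- by apply/val_inj/anti_leq; rewrite h1 h2.
Qed.

Lemma rankE i : rank y i = #|[set j | lexle j i]|.
Proof.
rewrite /rank -sum1_card [RHS]big_mkcond /=; apply: eq_bigr => j _.
by rewrite inE /psi /lexle; case: (_ || _).
Qed.

Lemma rank_le j i : lexle j i -> (rank y j <= rank y i)%N.
Proof.
move=> h; rewrite !rankE; apply: subset_leq_card; apply/subsetP => k.
by rewrite !inE => hk; apply: lexle_trans hk h.
Qed.

Lemma rank_lt j i : lexle j i -> j != i -> (rank y j < rank y i)%N.
Proof.
move=> h hne; rewrite !rankE; apply: proper_card; apply/properP; split.
  by apply/subsetP => k; rewrite !inE => hk; apply: lexle_trans hk h.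
exists i; first by rewrite inE lexle_refl.
rewrite inE; apply/negP => h'; move/eqP: hne; apply; exact: lexle_anti h h'.
Qed.

Lemma rank_gt0 i : (0 < rank y i)%N.
Proof. by rewrite rankE; apply/card_gt0P; exists i; rewrite inE lexle_refl. Qed.

Lemma rank_pred_lt i : ((rank y i).-1 < n)%N.
Proof.
have h1 := rank_gt0 i.
have h2 : (rank y i <= n)%N.
  by rewrite rankE -[X in (_ <= X)%N]card_ord; apply: max_card.
lia.
Qed.

Definition rk i : 'I_n := Ordinal (rank_pred_lt i).

Lemma lexle_rk j i : lexle j i = (rk j <= rk i)%N.
Proof.
rewrite /=. have hj := rank_gt0 j; have hi := rank_gt0 i.
case h: (lexle j i).
  have := rank_le h; lia.
have hij : lexle i j by move: (lexle_total j i); rewrite h.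
have hne : i != j by apply/eqP => e; move: h; rewrite e lexle_refl.
have := rank_lt hij hne; lia.
Qed.

Lemma rk_inj : injective rk.
Proof.
move=> i j e.
have : (rk i <= rk j)%N && (rk j <= rk i)%N by rewrite e leqnn.
by rewrite -!lexle_rk => /andP[h1 h2]; apply: lexle_anti.
Qed.

Definition sperm : {perm 'I_n} := perm rk_inj.

Lemma rank_sperm i : rank y i = (sperm i).+1.
Proof. rewrite permE /=; have := rank_gt0 i; lia. Qed.

Lemma psi_sperm i j : psi i j (y i) (y j) = (sperm j <= sperm i)%N.
Proof. by rewrite !permE -lexle_rk. Qed.

End Rk.

Definition Fst (R : realFieldType) (n : nat) (v : bool) (phi : nat -> R) (u : assign n) : R :=
  if v then \sum_(k < n) (u k)%:R * phi (k.+1)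
  else \sum_(k < n) (u k)%:R * phi (\sum_(l < n) (1 - u l) * (l <= k)%N)%N.

Definition gperm n (s : {perm 'I_n}) (z : assign n) : assign n := [ffun k => z ((s^-1)%g k)].

Lemma t_stat_F (R : realFieldType) n v (phi : nat -> R) (y : 'I_n -> R) z :
  t_stat v phi z y = Fst v phi (gperm (sperm y) z).
Proof.
rewrite /t_stat /Fst /gperm; case: v.
  symmetry; rewrite (reindex_inj (@perm_inj _ (sperm y))) /=.
  by apply: eq_bigr => i _; rewrite ffunE permK rank_sperm.
symmetry; rewrite (reindex_inj (@perm_inj _ (sperm y))) /=.
apply: eq_bigr => i _; rewrite ffunE permK; congr (_ * phi _).
rewrite (reindex_inj (@perm_inj _ (sperm y))) /=.
by apply: eq_bigr => j _; rewrite ffunE permK psi_sperm.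
Qed.

Lemma gperm_inj n (s : {perm 'I_n}) : injective (gperm s).
Proof.
move=> A B e; apply/ffunP => i.
by have := congr1 (fun f : assign n => f (s i)) e; rewrite /gperm !ffunE permK.
Qed.

Lemma gperm_cre n n1 (s : {perm 'I_n}) A : (gperm s A \in cre n n1) = (A \in cre n n1).
Proof.
rewrite /cre !inE; congr (_ == _).
have -> : [set i | gperm s A i] = (s^-1)%g @^-1: [set i | A i].
  by apply/setP => k; rewrite !inE /gperm ffunE.
by rewrite card_preimset //; apply: perm_inj.
Qed.

Lemma G_indep (R : realFieldType) n n1 v (phi : nat -> R) (y : 'I_n -> R) c :
  G_stat n1 v phi y c = #|[set B in cre n n1 | c <= Fst v phi B]|%:R / #|cre n n1|%:R.
Proof.
rewrite /G_stat /cre_prob; congr (_%:R / _).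
have -> : [set A in cre n n1 | c <= t_stat v phi A y] =
  (gperm (sperm y)) @^-1: [set B in cre n n1 | c <= Fst v phi B].
  apply/setP => A; rewrite !inE; have := gperm_cre n1 (sperm y) A; rewrite /cre !in_set => ->; by rewrite t_stat_F.
by rewrite card_preimset //; apply: gperm_inj.
Qed.

Lemma valid_gen (R : realFieldType) (T : finType) (C : {set T}) (f : T -> R) (a : R) :
  0 <= a ->
  #|[set z in C | #|[set x in C | f z <= f x]|%:R / #|C|%:R <= a]|%:R / #|C|%:R <= a.
Proof.
move=> a0.
set S := [set z in C | _].
have [->|[z0 hz0]] := set_0Vmem S; first by rewrite cards0 mul0r.
case: (arg_minP f hz0) => zs hzs hmin.
have hG : #|[set x in C | f zs <= f x]|%:R / #|C|%:R <= a.
  have : zs \in S by []. by rewrite inE => /andP[].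
apply: le_trans hG.
apply: ler_wpM2r; first by rewrite invr_ge0.
rewrite ler_nat; apply: subset_leq_card; apply/subsetP => z hz.
have := hmin z hz; move: hz; rewrite !inE => /andP[-> _] ->; done.
Qed.

Theorem proposition1 (R : realFieldType) (n n1 : nat)
    (hn1 : (1 <= n1)%N) (hn0 : (1 <= n - n1)%N)
    (Y1 Y0 : 'I_n -> R) (M1 M0 : 'I_n -> bool)
    (phi : nat -> R) (hphi : {homo phi : a b / (a <= b)%N >-> a <= b})
    (variant : bool) (y0 : 'I_n -> R)
    (delta : 'I_n -> R) (b : R)
    (hsharp : forall i, M1 i = M0 i)
    (hnull : forall i, Y1 i - Y0 i = delta i) :
  forall alpha : R, 0 < alpha < 1 ->
    cre_prob R n1 (fun z => pval n1 variant phi y0 Y1 Y0 M1 M0 delta b z <= alpha)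
      <= alpha.
Proof.
move=> alpha /andP[a0 _].
set w0 : 'I_n -> R := fun i => if M0 i then Y0 i else b.
have hw : forall z, t_stat variant phi z (wvec Y1 Y0 M1 M0 delta b z) = Fst variant phi (gperm (sperm w0) z).
  move=> z; rewrite -t_stat_F /t_stat /rank.
  have e : forall i, wvec Y1 Y0 M1 M0 delta b z i = w0 i.
    move=> i; rewrite /wvec /obsM /realY /w0 hsharp.
    case: (M0 i); case: (z i) => //=.
      by rewrite mulr1n mulr1 -(hnull i) opprB addrC subrK.
    by rewrite mulr0n mulr0 subr0.
  case: variant => /=;
    by apply: eq_bigr => i _; congr (_ * phi _); apply: eq_bigr => j _; rewrite !e.
have := valid_gen (cre n n1) (fun z => Fst variant phi (gperm (sperm w0) z)) (ltW a0).
apply: le_trans; rewrite le_eqVlt; apply/orP; left; apply/eqP.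
rewrite /cre_prob; congr (_%:R / _); apply: eq_card => z; rewrite !inE.
rewrite /pval hw G_indep; congr (_ && (_ <= _)).
rewrite -(@G_indep R n n1 variant phi w0) /G_stat /cre_prob.
congr (_%:R / _); apply: eq_card => x; rewrite !inE; congr (_ && _).
by rewrite t_stat_F.
Qed.
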